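(* Let $N\ge3$. For $p>p_{\rm S}=\frac{N+2}{N-2}$ let $\underline\Theta=\underline\Theta(p)\in(0,\pi)$ be the number such that problem (P$_\Theta$) has no regular solution for $\Theta\in(0,\underline\Theta)$ and has a regular solution for every $\Theta\in(\underline\Theta,\pi)$, and let $\Theta^*=\Theta^*(p)$ be as in the context. Then $\underline\Theta(p)\to\pi$ as $p\to\infty$; since $\underline\Theta\le\Theta^*$, also $\Theta^*(p)\to\pi$ as $p\to\infty$. Moreover, when $N=3$, for every $p\ge5$ problem (P$_\Theta$) has no regular solution for $\Theta\in(0,\pi-\arcsin\frac{4}{p-1}]$; in particular $\underline\Theta\ge\pi-\arcsin\frac{4}{p-1}$ for $p>5$.
   Context: For $\Theta\in(0,\pi)$, problem (P$_\Theta$) is: $U''+(N-1)\frac{\cos\theta}{\sin\theta}U'+U^p=0$ on $(0,\Theta)$, $U(\Theta)=0$, $U>0$ on $[0,\Theta)$; a regular solution is one with $U\in C^2[0,\Theta]$, $U'(0)=0$. $\Theta^*\in(0,\pi)$ is the first positive zero of the unique solution $U^*$ of $U''+(N-1)\frac{\cos\theta}{\sin\theta}U'+|U|^{p-1}U=0$ with $U^*(\theta)=a(\cos\frac\theta2)^{-(N-2)}(2\tan\frac\theta2)^{-\mu}(1+o(1))$ as $\theta\downarrow0$, $\mu=\frac{2}{p-1}$, $a=\{\mu(N-2-\mu)\}^{\mu/2}$. *)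

(* Defs.v *)
From Stdlib Require Import Reals.
Open Scope R_scope.

Definition pS (N : nat) : R := (INR N + 2) / (INR N - 2).

Definition deriv_within (a b : R) (f : R -> R) (x l : R) : Prop :=
  forall eps, eps > 0 -> exists delta, delta > 0 /\
    forall h, h <> 0 -> Rabs h < delta -> a <= x + h <= b ->
      Rabs ((f (x + h) - f x) / h - l) < eps.

Definition cont_within (a b : R) (g : R -> R) (x : R) : Prop :=
  forall eps, eps > 0 -> exists delta, delta > 0 /\
    forall y, a <= y <= b -> Rabs (y - x) < delta -> Rabs (g y - g x) < eps.

(* U is a regular solution of (P_Theta):
   U in C^2[0,Theta], U'(0)=0, U''+(N-1)cot(t)U'+U^p=0 on (0,Theta),
   U(Theta)=0, U>0 on [0,Theta). *)
Definition regular_sol (N : nat) (p Theta : R) (U : R -> R) : Prop :=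
  exists U1 U2 : R -> R,
    (forall x, 0 <= x <= Theta -> deriv_within 0 Theta U x (U1 x)) /\
    (forall x, 0 <= x <= Theta -> deriv_within 0 Theta U1 x (U2 x)) /\
    (forall x, 0 <= x <= Theta -> cont_within 0 Theta U2 x) /\
    U1 0 = 0 /\
    U Theta = 0 /\
    (forall x, 0 <= x < Theta -> 0 < U x) /\
    (forall x, 0 < x < Theta ->
       U2 x + (INR N - 1) * (cos x / sin x) * U1 x + Rpower (U x) p = 0).

Definition spow (p u : R) : R :=
  if Rlt_dec 0 (Rabs u) then Rpower (Rabs u) (p - 1) * u else 0.

Definition mu (p : R) : R := 2 / (p - 1).
Definition acoef (N : nat) (p : R) : R :=
  Rpower (mu p * (INR N - 2 - mu p)) (mu p / 2).

Definition sing_profile (N : nat) (p t : R) : R :=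
  acoef N p * Rpower (cos (t / 2)) (- (INR N - 2))
            * Rpower (2 * tan (t / 2)) (- mu p).

(* Ts is Theta^*(p): Ts in (0,pi) is the first positive zero of a solution U
   of U''+(N-1)cot U'+|U|^{p-1}U=0 (classical, on (0,T1) with T1 > Ts)
   satisfying U(t) = sing_profile(t) (1 + o(1)) as t -> 0+. *)
Definition is_Theta_star (N : nat) (p Ts : R) : Prop :=
  0 < Ts < PI /\
  exists (U U1 U2 : R -> R) (T1 : R),
    Ts < T1 <= PI /\
    (forall x, 0 < x < T1 ->
       derivable_pt_lim U x (U1 x) /\ derivable_pt_lim U1 x (U2 x) /\
       U2 x + (INR N - 1) * (cos x / sin x) * U1 x + spow p (U x) = 0) /\
    (forall eps, eps > 0 -> exists delta, delta > 0 /\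
       forall t, 0 < t < delta ->
         Rabs (U t - sing_profile N p t) <= eps * Rabs (sing_profile N p t)) /\
    (forall x, 0 < x < Ts -> 0 < U x) /\
    U Ts = 0.

Definition tends_at_infty (f : R -> R) (L : R) : Prop :=
  forall eps, eps > 0 -> exists M, forall p, p > M -> Rabs (f p - L) < eps.

(* Main.v *)
Require Import Defs.
From Stdlib Require Import Reals Lra Lia.
From Coquelicot Require Import Coquelicot.
Open Scope R_scope.

Definition Pf (L:nat) (p t:R) (G U U1: R->R) (y:R) : R :=
  - (sin y * sin y ^ L)^2 * (t - G y) * (U1 y)^2 / 2
  - (sin y * sin y ^ L)^2 * (t - G y) * Rpower (U y) (p+1) / (p+1)
  - (sin y * sin y ^ L) * U y * U1 y / 2.
Definition Ef (L:nat) (p t:R) (G:R->R) (y:R) : R :=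
  (p+3) - 4*(INR L + 1)* sin y ^ L * cos y * (t - G y).
Definition Df (L:nat) (p t:R) (G U:R->R) (y:R) : R :=
  sin y * sin y ^ L * Rpower (U y) (p+1) * Ef L p t G y / (2*(p+1)).

Lemma derivP L p t G U U1 U2 x :
  0 < sin x -> 0 < U x -> 0 < p ->
  derivable_pt_lim U x (U1 x) -> derivable_pt_lim U1 x (U2 x) ->
  derivable_pt_lim G x (/ (sin x * sin x ^ L)) ->
  U2 x + (INR L + 1) * (cos x / sin x) * U1 x + Rpower (U x) p = 0 ->
  derivable_pt_lim (Pf L p t G U U1) x (Df L p t G U x).
Proof.
  intros Hs HU Hp dU dU1 dG Hode.
  apply is_derive_Reals in dU. apply is_derive_Reals in dU1. apply is_derive_Reals in dG.
  assert (dW : is_derive (fun y => Rpower y (p+1)) (U x) ((p+1) * Rpower (U x) p)).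
  { apply is_derive_Reals. replace p with (p+1-1) at 2 by ring. apply derivable_pt_lim_power; auto. }
  assert (HW : Rpower (U x) (p+1) = U x * Rpower (U x) p).
  { rewrite Rpower_plus, Rpower_1 by auto. ring. }
  apply is_derive_Reals. unfold Pf.
  auto_derive.
  - repeat split; eexists; eauto.
  - replace (Derive (fun x0 => U x0) x) with (U1 x) by (symmetry; apply is_derive_unique; exact dU).
    replace (Derive (fun x0 => U1 x0) x) with (U2 x) by (symmetry; apply is_derive_unique; exact dU1).
    replace (Derive (fun x0 => G x0) x) with (/ (sin x * sin x ^ L)) by (symmetry; apply is_derive_unique; exact dG).
    replace (Derive (fun x0 => Rpower x0 (p+1)) (U x)) with ((p + 1) * Rpower (U x) p) by (symmetry; apply is_derive_unique; exact dW).
    assert (HL: sin x * (INR L * sin x ^ Init.Nat.pred L) = INR L * sin x ^ L) by (destruct L; simpl; ring).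
    unfold Df, Ef. rewrite HW in *.
    replace (U2 x) with (- (INR L + 1) * (cos x / sin x) * U1 x - Rpower (U x) p) by lra.
    assert (sin x ^ L <> 0) by (apply pow_nonzero; lra).
    replace (sin x * (1 * cos x * (INR L * sin x ^ Init.Nat.pred L))) with (cos x * (INR L * sin x ^ L)) by (rewrite <- HL; ring).
    field. lra.
Qed.

Lemma core_abs (P D : R -> R) (T : R) :
  (forall x, 0 < x < T -> derivable_pt_lim P x (D x)) ->
  (forall x, 0 < x < T -> 0 <= D x) ->
  (forall x e, 0 < x < T -> e > 0 -> exists y, 0 < y < x /\ P y >= - e) ->
  (forall x e, 0 < x < T -> e > 0 -> exists y, x < y < T /\ P y <= e) ->
  forall a b, 0 < a -> a < b -> b < T -> exists c, a < c < b /\ D c = 0.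
Proof.
  intros HD HDp H0 HT.
  assert (mono : forall x y, 0 < x -> x < y -> y < T -> P x <= P y).
  { intros x y Hx Hxy HyT.
    destruct (MVT_cor2 P D x y Hxy) as [c [Hc Hc2]].
    { intros c Hc; apply HD; lra. }
    assert (0 <= D c) by (apply HDp; lra). nra. }
  assert (ge0 : forall x, 0 < x < T -> 0 <= P x).
  { intros x Hx. destruct (Rle_or_lt 0 (P x)) as [h|h]; auto.
    destruct (H0 x (- P x / 2) Hx) as [y [Hy1 Hy2]]; [lra|].
    assert (P y <= P x) by (apply mono; lra). lra. }
  assert (le0 : forall x, 0 < x < T -> P x <= 0).
  { intros x Hx. destruct (Rle_or_lt (P x) 0) as [h|h]; auto.
    destruct (HT x (P x / 2) Hx) as [y [Hy1 Hy2]]; [lra|].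
    assert (P x <= P y) by (apply mono; lra). lra. }
  intros a b Ha Hab HbT.
  destruct (MVT_cor2 P D a b Hab) as [c [Hc Hc2]].
  { intros c Hc; apply HD; lra. }
  exists c; split; auto.
  assert (P a = 0) by (apply Rle_antisym; [apply le0|apply ge0]; lra).
  assert (P b = 0) by (apply Rle_antisym; [apply le0|apply ge0]; lra).
  assert (Hz : D c * (b - a) = 0) by lra.
  apply Rmult_integral in Hz. destruct Hz; lra.
Qed.

Lemma abs_le x B : Rabs x <= B -> -B <= x <= B.
Proof. unfold Rabs; destruct (Rcase_abs x); lra. Qed.

Lemma sin_le_id y : 0 <= y -> sin y <= y.
Proof.
  intros Hy. destruct (Req_dec y 0) as [->|Hne]. rewrite sin_0; lra.
  destruct (MVT_cor2 sin cos 0 y) as [c [Hc _]]. lra.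
  intros; apply derivable_pt_lim_sin.
  rewrite sin_0 in Hc. pose proof (COS_bound c). nra.
Qed.

Lemma sinL_le1 x L : 0 < x < PI -> 0 < sin x ^ L <= 1.
Proof.
  intros Hx. pose proof (sin_gt_0 x ltac:(lra) ltac:(lra)). pose proof (SIN_bound x).
  split. apply pow_lt; lra. rewrite <- (pow1 L). apply pow_incr; lra.
Qed.

Lemma core2 L p t G U U1 U2 T :
  0 < p -> 0 < T < PI ->
  (forall x, 0 < x < T -> derivable_pt_lim U x (U1 x)) ->
  (forall x, 0 < x < T -> derivable_pt_lim U1 x (U2 x)) ->
  (forall x, 0 < x < T -> U2 x + (INR L + 1) * (cos x / sin x) * U1 x + Rpower (U x) p = 0) ->
  (forall x, 0 < x < T -> 0 < U x) ->
  (forall x, 0 < x < T -> derivable_pt_lim G x (/ (sin x * sin x ^ L))) ->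
  (forall x, 0 < x < T -> G x <= t) ->
  (forall x, 0 < x < T -> 0 <= Ef L p t G x) ->
  (forall e, e > 0 -> exists d, d > 0 /\ forall y, T - d < y < T -> Rabs (U y) < e) ->
  (exists B d, d > 0 /\ forall y, T - d < y < T -> Rabs (U1 y) <= B) ->
  (forall x e, 0 < x < T -> e > 0 -> exists y, 0 < y < x /\ Pf L p t G U U1 y >= - e) ->
  forall a b, 0 < a -> a < b -> b < T -> exists c, a < c < b /\ Ef L p t G c = 0.
Proof.
  intros Hp HT dU dU1 Hode HU dG HGt HE HUT [B [d1 [Hd1 HB]]] H0 a b Ha Hab HbT.
  destruct (core_abs (Pf L p t G U U1) (Df L p t G U) T) with (a := a) (b := b)
    as [c [Hc HDc]]; auto.
  - intros x Hx. apply (derivP L p t G U U1 U2); auto.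
    apply sin_gt_0; lra.
  - intros x Hx. unfold Df. pose proof (sin_gt_0 x ltac:(lra) ltac:(lra)).
    pose proof (sinL_le1 x L ltac:(lra)).
    assert (0 < Rpower (U x) (p+1)) by (unfold Rpower; apply exp_pos).
    pose proof (HE x Hx). apply Rmult_le_pos.
    + apply Rmult_le_pos; [|lra]. apply Rmult_le_pos; [|lra]. apply Rmult_le_pos; lra.
    + left. apply Rinv_0_lt_compat. lra.
  - intros x e Hx He.
    assert (HB0 : 0 <= B) by (specialize (HB (T - Rmin d1 (T-x) / 2)); 
       assert (0 < Rmin d1 (T - x)) by (apply Rmin_pos; lra);
       pose proof (Rmin_l d1 (T-x)); pose proof (Rabs_pos (U1 (T - Rmin d1 (T - x) / 2)));
       assert (Rabs (U1 (T - Rmin d1 (T - x) / 2)) <= B) by (apply HB; lra); lra).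
    destruct (HUT (e / (B + 1))) as [d2 [Hd2 HU2]].
    { apply Rdiv_lt_0_compat; lra. }
    set (m := Rmin (Rmin d1 d2) (T - x)).
    assert (0 < m) by (apply Rmin_pos; [apply Rmin_pos|]; lra).
    assert (m <= Rmin d1 d2) by apply Rmin_l. assert (m <= T - x) by apply Rmin_r.
    pose proof (Rmin_l d1 d2). pose proof (Rmin_r d1 d2).
    exists (T - m / 2). split. lra.
    set (y := T - m / 2).
    assert (Hy : 0 < y < T) by (unfold y; lra).
    pose proof (HB y ltac:(unfold y; lra)). pose proof (HU2 y ltac:(unfold y; lra)).
    pose proof (HGt y Hy). pose proof (HU y Hy).
    pose proof (sin_gt_0 y ltac:(lra) ltac:(lra)). pose proof (SIN_bound y).
    pose proof (sinL_le1 y L ltac:(lra)).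
    assert (0 < Rpower (U y) (p+1)) by (unfold Rpower; apply exp_pos).
    unfold Pf.
    set (a1 := sin y ^ L) in *. set (s := sin y) in *. set (W := Rpower (U y) (p+1)) in *.
    set (u := U y) in *. set (v := U1 y) in *. set (g := G y) in *.
    assert (Hv : - B <= v <= B) by (apply abs_le; auto).
    assert (Hu : u < e / (B+1)) by (rewrite Rabs_pos_eq in H6; lra).
    assert (e / (B+1) * (B+1) = e) by (field; lra).
    assert (X1 : 0 <= (s * a1) ^ 2 * (t - g) * v ^ 2 / 2).
    { apply Rmult_le_pos; [|lra]. apply Rmult_le_pos; [apply Rmult_le_pos|]; try nra. }
    assert (X2 : 0 <= (s * a1) ^ 2 * (t - g) * W / (p + 1)).
    { unfold Rdiv. apply Rmult_le_pos; [|left; apply Rinv_0_lt_compat; lra].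
      apply Rmult_le_pos; [apply Rmult_le_pos|]; try nra. }
    assert (X3 : - (s * a1 * u * v / 2) <= e).
    { assert (0 <= s * a1 <= 1) by nra.
      assert (0 <= u * B <= e / (B+1) * B) by (split; nra).
      assert (e / (B+1) * B <= e) by nra.
      assert (- (u * B) <= u * v <= u * B) by (split; nra).
      nra. }
    match goal with |- ?a <= _ => replace a with (- ((s * a1) ^ 2 * (t - g) * v ^ 2 / 2) - (s * a1) ^ 2 * (t - g) * W / (p + 1) - s * a1 * u * v / 2) by (field; lra) end.
    lra.
  - exists c. split; auto. unfold Df in HDc.
    pose proof (sin_gt_0 c ltac:(lra) ltac:(lra)).
    pose proof (sinL_le1 c L ltac:(lra)).
    assert (0 < Rpower (U c) (p+1)) by (unfold Rpower; apply exp_pos).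
    assert (0 < sin c * sin c ^ L * Rpower (U c) (p + 1)) by (apply Rmult_lt_0_compat; [apply Rmult_lt_0_compat|]; lra).
    set (K := sin c * sin c ^ L * Rpower (U c) (p + 1)) in *.
    assert (HK : K * Ef L p t G c = 0).
    { replace (K * Ef L p t G c) with (K * Ef L p t G c / (2 * (p + 1)) * (2 * (p+1))) by (field; lra).
      rewrite HDc. ring. }
    apply Rmult_integral in HK. destruct HK; lra.
Qed.

Lemma Pbound L p t G U U1 y :
  0 < p -> 0 < sin y <= 1 -> 0 < U y -> sin y ^ L * Rabs (G y) <= 1 ->
  Rabs (Pf L p t G U U1 y) <=
   sin y ^ 2 * sin y ^ L * (Rabs t + 1) * (U1 y ^ 2 / 2 + Rpower (U y) (p+1) / (p+1))
   + sin y * sin y ^ L * U y * Rabs (U1 y) / 2.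
Proof.
  intros Hp Hs Hu HG.
  assert (Ha : 0 < sin y ^ L <= 1) by (split; [apply pow_lt; lra| rewrite <- (pow1 L); apply pow_incr; lra]).
  assert (0 < Rpower (U y) (p+1)) by (unfold Rpower; apply exp_pos).
  unfold Pf.
  set (a := sin y ^ L) in *. set (s := sin y) in *. set (W := Rpower (U y) (p+1)) in *.
  set (u := U y) in *. set (v := U1 y) in *. set (g := G y) in *.
  assert (X : Rabs ((s * a)^2 * (t - g)) <= s^2 * a * (Rabs t + 1)).
  { rewrite Rabs_mult. rewrite (Rabs_pos_eq ((s*a)^2)) by nra.
    assert (Rabs (t - g) <= Rabs t + Rabs g) by (unfold Rminus; rewrite <- (Rabs_Ropp g); apply Rabs_triang).
    assert (0 <= Rabs g) by apply Rabs_pos.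
    assert (a * Rabs g <= 1) by auto.
    assert ((s*a)^2 * Rabs (t - g) <= (s*a)^2 * (Rabs t + Rabs g)) by (apply Rmult_le_compat_l; nra).
    assert ((s*a)^2 * Rabs g = s^2 * a * (a * Rabs g)) by ring.
    assert (s^2 * a * (a * Rabs g) <= s^2 * a * 1) by (apply Rmult_le_compat_l; nra).
    assert ((s*a)^2 * Rabs t <= s^2 * a * Rabs t) by (pose proof (Rabs_pos t); assert (0 <= s^2 * a * Rabs t * (1 - a)) by (repeat apply Rmult_le_pos; nra); nra).
    nra. }
  match goal with |- Rabs ?e <= _ => replace e with (- (((s * a)^2 * (t - g)) * (v ^ 2 / 2 + W / (p+1))) + - (s * a * u * v / 2)) by (field; lra) end.
  set (Z := (s * a)^2 * (t - g)) in *.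
  eapply Rle_trans. apply Rabs_triang. rewrite !Rabs_Ropp. apply Rplus_le_compat.
  - assert (0 <= v^2) by nra. assert (0 < W / (p+1)) by (apply Rdiv_lt_0_compat; lra).
    rewrite Rabs_mult. rewrite (Rabs_pos_eq (v^2/2 + W/(p+1))) by lra.
    apply Rmult_le_compat_r; auto. lra.
  - replace (s * a * u * v / 2) with ((s * a * u / 2) * v) by field.
    rewrite Rabs_mult, (Rabs_pos_eq (s*a*u/2)) by (assert (0 < s*a) by nra; assert (0 < s*a*u) by nra; lra). right; field.
Qed.

Lemma dw_interior T f x l : deriv_within 0 T f x l -> 0 < x < T -> derivable_pt_lim f x l.
Proof.
  intros H Hx e He. destruct (H e He) as [d [Hd Hh]].
  assert (0 < Rmin d (Rmin x (T - x))) by (repeat apply Rmin_pos; lra).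
  exists (mkposreal _ H0). intros h Hh0 Hh1. simpl in Hh1. apply Hh; auto.
  pose proof (Rmin_l d (Rmin x (T - x))). lra.
  pose proof (Rmin_r d (Rmin x (T - x))). pose proof (Rmin_l x (T - x)). pose proof (Rmin_r x (T - x)).
  unfold Rabs in Hh1; destruct (Rcase_abs h); lra.
Qed.

Lemma dw_cont T f x l : deriv_within 0 T f x l ->
  forall e, e > 0 -> exists d, d > 0 /\ forall y, 0 <= y <= T -> Rabs (y - x) < d -> Rabs (f y - f x) < e.
Proof.
  intros H e He. destruct (H 1 ltac:(lra)) as [d [Hd Hh]].
  exists (Rmin d (e / (Rabs l + 1))). split.
  { apply Rmin_pos; auto. apply Rdiv_lt_0_compat; auto. pose proof (Rabs_pos l); lra. }
  intros y Hy Hyx. destruct (Req_dec y x) as [->|Hne].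
  { rewrite Rminus_diag, Rabs_R0; lra. }
  pose proof (Rmin_l d (e / (Rabs l + 1))). pose proof (Rmin_r d (e / (Rabs l + 1))).
  specialize (Hh (y - x) ltac:(lra) ltac:(lra) ltac:(replace (x + (y - x)) with y by ring; lra)).
  replace (x + (y - x)) with y in Hh by ring.
  assert (Hq : Rabs ((f y - f x) / (y - x)) < Rabs l + 1).
  { eapply Rle_lt_trans. 2: { instantiate (1 := Rabs l + Rabs ((f y - f x) / (y - x) - l)). lra. }
    replace ((f y - f x) / (y - x)) with (l + ((f y - f x) / (y - x) - l)) at 1 by ring.
    apply Rabs_triang. }
  replace (f y - f x) with ((f y - f x) / (y - x) * (y - x)) by (field; lra).
  rewrite Rabs_mult.
  assert (0 < Rabs (y - x)) by (apply Rabs_pos_lt; lra).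
  assert (Rabs (y - x) < e / (Rabs l + 1)) by lra.
  pose proof (Rabs_pos l).
  assert (e / (Rabs l + 1) * (Rabs l + 1) = e) by (field; lra).
  pose proof (Rabs_pos ((f y - f x) / (y - x))). nra.
Qed.

Lemma INR_SSL L : INR (S (S L)) - 1 = INR L + 1.
Proof. rewrite !S_INR. ring. Qed.

Lemma reg_core L p T U t G :
  0 < p -> 0 < T < PI -> regular_sol (S (S L)) p T U ->
  (forall x, 0 < x < T -> derivable_pt_lim G x (/ (sin x * sin x ^ L))) ->
  (forall x, 0 < x < T -> G x <= t) ->
  (forall x, 0 < x < T -> 0 <= Ef L p t G x) ->
  (exists d, d > 0 /\ forall x, 0 < x < d -> sin x ^ L * Rabs (G x) <= 1) ->
  forall a b, 0 < a -> a < b -> b < T -> exists c, a < c < b /\ Ef L p t G c = 0.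
Proof.
  intros Hp HT [U1 [U2 [dU [dU1 [cU2 [H10 [HUT [Hpos Hode]]]]]]]] dG HGt HE [dg [Hdg HGb]].
  apply (core2 L p t G U U1 U2 T); auto.
  - intros x Hx. apply (dw_interior T); auto. apply dU; lra.
  - intros x Hx. apply (dw_interior T); auto. apply dU1; lra.
  - intros x Hx. rewrite <- INR_SSL. apply Hode; auto.
  - intros x Hx. apply Hpos; lra.
  - intros e He. destruct (dw_cont T U T (U1 T) (dU T ltac:(lra)) e He) as [d [Hd Hc]].
    exists (Rmin d T); split. apply Rmin_pos; lra. intros y Hy.
    pose proof (Rmin_l d T); pose proof (Rmin_r d T). rewrite HUT in Hc.
    specialize (Hc y ltac:(lra)). rewrite Rminus_0_r in Hc. apply Hc.
    rewrite Rabs_left; lra.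
  - destruct (dw_cont T U1 T (U2 T) (dU1 T ltac:(lra)) 1 ltac:(lra)) as [d [Hd Hc]].
    exists (Rabs (U1 T) + 1), (Rmin d T); split. apply Rmin_pos; lra. intros y Hy.
    pose proof (Rmin_l d T); pose proof (Rmin_r d T).
    assert (Rabs (U1 y - U1 T) < 1) by (apply Hc; [lra| rewrite Rabs_left; lra]).
    assert (Rabs (U1 y) <= Rabs (U1 y - U1 T) + Rabs (U1 T)).
    { replace (U1 y) with ((U1 y - U1 T) + U1 T) at 1 by ring. apply Rabs_triang. }
    lra.
  - intros x e Hx He.
    assert (HU0 : 0 < U 0) by (apply Hpos; lra).
    destruct (dw_cont T U 0 (U1 0) (dU 0 ltac:(lra)) (U 0) HU0) as [d1 [Hd1 Hc1]].
    destruct (dw_cont T U1 0 (U2 0) (dU1 0 ltac:(lra)) 1 ltac:(lra)) as [d2 [Hd2 Hc2]].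
    set (B := Rpower (2 * U 0) (p + 1)).
    assert (HB : 0 < B) by (unfold B, Rpower; apply exp_pos).
    set (K := (Rabs t + 1) * (1 / 2 + B / (p + 1)) + U 0).
    assert (HK : 0 < K).
    { unfold K. pose proof (Rabs_pos t). assert (0 < B / (p+1)) by (apply Rdiv_lt_0_compat; lra). nra. }
    set (y := Rmin (Rmin (Rmin x d1) (Rmin d2 dg)) (Rmin (e / K) 1) / 2).
    assert (Hm : 0 < Rmin (Rmin (Rmin x d1) (Rmin d2 dg)) (Rmin (e / K) 1)).
    { repeat apply Rmin_pos; try lra. apply Rdiv_lt_0_compat; lra. }
    pose proof (Rmin_l (Rmin (Rmin x d1) (Rmin d2 dg)) (Rmin (e / K) 1)).
    pose proof (Rmin_r (Rmin (Rmin x d1) (Rmin d2 dg)) (Rmin (e / K) 1)).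
    pose proof (Rmin_l (Rmin x d1) (Rmin d2 dg)). pose proof (Rmin_r (Rmin x d1) (Rmin d2 dg)).
    pose proof (Rmin_l x d1). pose proof (Rmin_r x d1). pose proof (Rmin_l d2 dg). pose proof (Rmin_r d2 dg).
    pose proof (Rmin_l (e / K) 1). pose proof (Rmin_r (e / K) 1).
    exists y. split. unfold y; lra.
    assert (Hy : 0 < y < T) by (unfold y; lra).
    assert (Hy1 : y <= 1 /\ y <= e / K) by (unfold y; lra).
    assert (HUy : Rabs (U y - U 0) < U 0) by (apply Hc1; [lra| rewrite Rminus_0_r, Rabs_right; unfold y; lra]).
    assert (HU1y : Rabs (U1 y - U1 0) < 1) by (apply Hc2; [lra| rewrite Rminus_0_r, Rabs_right; unfold y; lra]).
    rewrite H10, Rminus_0_r in HU1y.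
    assert (Uy : 0 < U y) by (apply Hpos; lra).
    assert (Uy2 : U y <= 2 * U 0) by (apply Rlt_le, abs_le in HUy; lra).
    assert (Wy : Rpower (U y) (p+1) <= B) by (apply Rle_Rpower_l; lra).
    pose proof (sin_gt_0 y ltac:(lra) ltac:(lra)). pose proof (SIN_bound y).
    pose proof (sin_le_id y ltac:(lra)).
    pose proof (sinL_le1 y L ltac:(lra)).
    assert (Gy : sin y ^ L * Rabs (G y) <= 1) by (apply HGb; unfold y; lra).
    pose proof (Pbound L p t G U U1 y Hp ltac:(lra) Uy Gy) as PB.
    set (a1 := sin y ^ L) in *. set (s := sin y) in *.
    assert (v2 : U1 y ^ 2 <= 1) by (apply Rlt_le, abs_le in HU1y; nra).
    assert (HW : Rpower (U y) (p+1) / (p+1) <= B / (p+1)) by (unfold Rdiv; apply Rmult_le_compat_r; [left; apply Rinv_0_lt_compat; lra| lra]).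
    assert (T1 : s ^ 2 * a1 * (Rabs t + 1) * (U1 y ^ 2 / 2 + Rpower (U y) (p + 1) / (p + 1))
                 <= s * ((Rabs t + 1) * (1/2 + B / (p+1)))).
    { pose proof (Rabs_pos t).
      assert (0 <= s^2 * a1 <= s) by (assert (0 < s * a1) by (apply Rmult_lt_0_compat; lra); assert (s * a1 <= s * 1) by (apply Rmult_le_compat_l; lra); assert (s * (s*a1) <= 1 * (s * a1)) by (apply Rmult_le_compat_r; lra); split; nra).
      assert (0 <= U1 y ^ 2 / 2 + Rpower (U y) (p + 1) / (p + 1) <= 1/2 + B / (p+1)).
      { split. assert (0 < Rpower (U y) (p + 1) / (p + 1)) by (apply Rdiv_lt_0_compat; [unfold Rpower; apply exp_pos|lra]). nra. lra. }
      set (q := U1 y ^ 2 / 2 + Rpower (U y) (p + 1) / (p + 1)) in *.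
      assert (0 <= (Rabs t + 1) * q) by (apply Rmult_le_pos; lra).
      assert (s ^ 2 * a1 * ((Rabs t + 1) * q) <= s * ((Rabs t + 1) * q)) by (apply Rmult_le_compat_r; lra).
      assert ((Rabs t + 1) * q <= (Rabs t + 1) * (1/2 + B / (p+1))) by (apply Rmult_le_compat_l; lra).
      assert (s * ((Rabs t + 1) * q) <= s * ((Rabs t + 1) * (1/2 + B / (p+1)))) by (apply Rmult_le_compat_l; lra).
      replace (s ^ 2 * a1 * (Rabs t + 1) * q) with (s ^ 2 * a1 * ((Rabs t + 1) * q)) by ring.
      lra. }
    assert (T2 : s * a1 * U y * Rabs (U1 y) / 2 <= s * U 0).
    { pose proof (Rabs_pos (U1 y)). assert (0 <= s * a1 <= s) by (assert (0 < s * a1) by (apply Rmult_lt_0_compat; lra); assert (s * a1 <= s * 1) by (apply Rmult_le_compat_l; lra); lra).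
      assert (U y * Rabs (U1 y) <= 2 * U 0) by nra.
      assert (0 <= s * a1 * (U y * Rabs (U1 y)) <= s * (2 * U 0)) by (split; [apply Rmult_le_pos; nra| apply Rmult_le_compat; nra]).
      nra. }
    assert (Rabs (Pf L p t G U U1 y) <= s * K) by (unfold K; lra).
    assert (s * K <= e).
    { assert (Hse : s <= e / K) by lra. apply Rmult_le_compat_r with (r := K) in Hse; [|lra].
      replace (e / K * K) with e in Hse by (field; lra). lra. }
    match goal with H : Rabs (Pf _ _ _ _ _ _ _) <= _ |- _ => pose proof (abs_le _ _ H) end. lra.
Qed.

Lemma partA p T : p >= 5 -> 0 < T <= PI - asin (4 / (p - 1)) ->
  ~ exists U, regular_sol 3 p T U.
Proof.
  intros Hp HT [U HU].
  set (S := 4 / (p - 1)) in *.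
  assert (HS : 0 < S <= 1).
  { unfold S. split. apply Rdiv_lt_0_compat; lra.
    apply Rmult_le_reg_r with (p - 1). lra. unfold Rdiv. rewrite Rmult_assoc, Rinv_l; lra. }
  assert (HSp : S * (p - 1) = 4) by (unfold S; field; lra).
  set (phi := asin S) in *.
  assert (sphi : sin phi = S) by (apply sin_asin; lra).
  set (C := sqrt (1 - S²)).
  assert (cphi : cos phi = C) by (apply cos_asin; lra).
  assert (HC2 : C * C = 1 - S * S).
  { unfold C. rewrite sqrt_sqrt. unfold Rsqr; ring. unfold Rsqr; nra. }
  assert (HC0 : 0 <= C) by apply sqrt_pos.
  pose proof (asin_bound S) as Hb. fold phi in Hb.
  assert (Hphi : 0 < phi).
  { destruct (Rle_or_lt phi 0) as [h|h]; auto.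
    assert (0 <= sin (- phi)) by (apply sin_ge_0; lra).
    rewrite sin_neg in H. lra. }
  assert (HTpi : 0 < T < PI) by lra.
  set (t := C / S).
  set (G := fun x => - (cos x / sin x)).
  assert (Ef_eq : forall x, 0 < x < PI -> Ef 1 p t G x = 4 * ((1 + S) * sin x - C * cos x)^2 / (1 + S) / S).
  { intros x Hx. pose proof (sin_gt_0 x ltac:(lra) ltac:(lra)). unfold Ef, G, t. simpl.
    pose proof (sin2_cos2 x). unfold Rsqr in *.
    replace p with (4 / S + 1) by (field_simplify_eq; lra).
    field_simplify_eq; try lra.
    replace (C^2) with (1 - S * S) by (simpl; lra). nra. }
  assert (Ef_ge : forall x, 0 < x < PI -> 0 <= Ef 1 p t G x).
  { intros x Hx. rewrite Ef_eq by auto. apply Rmult_le_pos; [apply Rmult_le_pos|].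
    apply Rmult_le_pos; [lra| apply pow2_ge_0].
    left; apply Rinv_0_lt_compat; lra. left; apply Rinv_0_lt_compat; lra. }
  assert (Hz : forall a b, 0 < a -> a < b -> b < T -> exists c, a < c < b /\ Ef 1 p t G c = 0).
  { apply (reg_core 1 p T U t G); auto; try lra.
    - intros x Hx. pose proof (sin_gt_0 x ltac:(lra) ltac:(lra)).
      apply is_derive_Reals. unfold G. auto_derive. lra.
      pose proof (sin2_cos2 x). unfold Rsqr in *. simpl. rewrite Rmult_1_r.
      field_simplify_eq; [|lra]. nra.
    - intros x Hx. pose proof (sin_gt_0 x ltac:(lra) ltac:(lra)). unfold G, t.
      assert (0 <= sin (x + phi)) by (apply sin_ge_0; lra).
      rewrite sin_plus, sphi, cphi in H0.
      apply Rmult_le_reg_r with (sin x * S). nra.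
      replace (- (cos x / sin x) * (sin x * S)) with (- (cos x * S)) by (field; lra).
      replace (C / S * (sin x * S)) with (sin x * C) by (field; lra). lra.
    - intros x Hx. apply Ef_ge; lra.
    - exists PI. split. apply PI_RGT_0. intros x Hx.
      pose proof (sin_gt_0 x ltac:(lra) ltac:(lra)). unfold G. simpl.
      rewrite Rabs_Ropp. unfold Rdiv. rewrite Rabs_mult, Rabs_inv, (Rabs_pos_eq (sin x)) by lra.
      replace (sin x * 1 * (Rabs (cos x) * / sin x)) with (Rabs (cos x)) by (field; lra).
      pose proof (COS_bound x). unfold Rabs; destruct Rcase_abs; lra. }
  destruct (Hz (T/4) (T/2)) as [c1 [Hc1 E1]]; try lra.
  destruct (Hz (T/2) (3*T/4)) as [c2 [Hc2 E2]]; try lra.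
  assert (Hsq : forall c, 0 < c < PI -> Ef 1 p t G c = 0 -> (1 + S) * sin c = C * cos c).
  { intros c Hc E. rewrite Ef_eq in E by auto.
    assert (((1 + S) * sin c - C * cos c)^2 = 0).
    { apply Rmult_eq_reg_l with (4 / (1 + S) / S). rewrite Rmult_0_r. rewrite <- E. field. lra.
      apply Rgt_not_eq. apply Rdiv_lt_0_compat; [apply Rdiv_lt_0_compat|]; lra. }
    nra. }
  pose proof (Hsq c1 ltac:(lra) E1) as Q1. pose proof (Hsq c2 ltac:(lra) E2) as Q2.
  assert (Q3 : 0 < sin (c2 - c1)) by (apply sin_gt_0; lra).
  rewrite sin_minus in Q3.
  assert (Q4 : (1 + S) * (sin c2 * cos c1 - cos c2 * sin c1) = 0).
  { replace ((1 + S) * (sin c2 * cos c1 - cos c2 * sin c1)) with (((1 + S) * sin c2) * cos c1 - cos c2 * ((1 + S) * sin c1)) by ring.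
    rewrite Q1, Q2. ring. }
  apply Rmult_integral in Q4. destruct Q4; lra.
Qed.

Definition fG (L : nat) (z : R) := / (sin z * sin z ^ L).
Definition Gf (L : nat) (x : R) := RInt (fG L) (PI/2) x.

Lemma fG_cont L z : 0 < z < PI -> continuous (fG L) z.
Proof.
  intros Hz. pose proof (sin_gt_0 z ltac:(lra) ltac:(lra)).
  apply (ex_derive_continuous (K := R_AbsRing) (V := R_NormedModule)). unfold fG. auto_derive.
  assert (0 < sin z ^ L) by (apply pow_lt; lra). nra.
Qed.

Lemma Gf_der L x : 0 < x < PI -> derivable_pt_lim (Gf L) x (/ (sin x * sin x ^ L)).
Proof.
  intros Hx. apply is_derive_Reals. change (/ (sin x * sin x ^ L)) with (fG L x).
  apply (is_derive_RInt (fG L) (Gf L) (PI/2)); [| apply fG_cont; auto].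
  assert (Hr : 0 < Rmin x (PI - x) / 2) by (apply Rlt_mult_inv_pos; [apply Rmin_pos|]; lra).
  exists (mkposreal _ Hr). intros b Hb. simpl in Hb.
  change (ball x (Rmin x (PI - x) / 2) b) with (Rabs (b - x) < Rmin x (PI - x) / 2) in Hb.
  unfold Gf. apply (RInt_correct (V := R_CompleteNormedModule)). apply (ex_RInt_continuous (V := R_CompleteNormedModule)). intros z Hz.
  apply fG_cont.
  pose proof (Rmin_l x (PI - x)). pose proof (Rmin_r x (PI - x)).
  apply Rlt_le, abs_le in Hb.
  assert (Rmin (PI/2) b >= Rmin x (PI - x) / 2). 
  { apply Rmin_case; lra. }
  assert (Rmax (PI/2) b <= PI - Rmin x (PI - x) / 2).
  { apply Rmax_case; lra. }
  lra.
Qed.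

Lemma Gf_half L : Gf L (PI/2) = 0.
Proof. unfold Gf. apply (RInt_point (V := R_CompleteNormedModule)). Qed.

Lemma Gf_mono L x y : 0 < x -> x < y -> y < PI -> Gf L x < Gf L y.
Proof.
  intros Hx Hxy Hy.
  destruct (MVT_cor2 (Gf L) (fun z => / (sin z * sin z ^ L)) x y Hxy) as [c [Hc Hc2]].
  { intros c Hc. apply Gf_der. lra. }
  pose proof (sin_gt_0 c ltac:(lra) ltac:(lra)).
  assert (0 < sin c ^ L) by (apply pow_lt; lra).
  assert (0 < / (sin c * sin c ^ L)) by (apply Rinv_0_lt_compat; nra).
  nra.
Qed.

Lemma Gf_le L x y : 0 < x -> x <= y -> y < PI -> Gf L x <= Gf L y.
Proof. intros. destruct (Req_dec x y) as [->|]; [lra|]. left; apply Gf_mono; lra. Qed.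

Lemma Gf_bound L x : (1 <= L)%nat -> 0 < x <= PI/2 -> sin x ^ L * Rabs (Gf L x) <= 1.
Proof.
  intros HL Hx.
  pose proof PI_RGT_0 as Hpi.
  assert (Hle : Gf L x <= 0) by (rewrite <- (Gf_half L); apply Gf_le; lra).
  destruct (Req_dec x (PI/2)) as [->|Hne].
  { rewrite Gf_half, Rabs_R0. lra. }
  set (Hf := fun y => Gf L y + cos y / sin y ^ L).
  set (H' := fun y => (1 - INR L) * cos y ^ 2 / (sin y * sin y ^ L)).
  destruct (MVT_cor2 Hf H' x (PI/2)) as [c [Hc2 Hc]]. lra.
  { intros c Hc. pose proof (sin_gt_0 c ltac:(lra) ltac:(lra)).
    assert (0 < sin c ^ L) by (apply pow_lt; lra).
    apply is_derive_Reals. unfold Hf.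
    pose proof (Gf_der L c ltac:(lra)) as dG. apply is_derive_Reals in dG.
    auto_derive.
    - split; [eexists; eauto|]. split; auto. lra.
    - replace (Derive (fun x0 => Gf L x0) c) with (/ (sin c * sin c ^ L)) by (symmetry; apply is_derive_unique; exact dG).
      unfold H'.
      assert (HLs : sin c * sin c ^ Init.Nat.pred L = sin c ^ L) by (destruct L; [lia|]; simpl; ring).
      pose proof (sin2_cos2 c). unfold Rsqr in *.
      replace (sin c ^ Init.Nat.pred L) with (sin c ^ L / sin c) by (rewrite <- HLs; field; lra).
      field_simplify_eq; try lra. replace (sin c ^ 2) with (1 - cos c ^ 2) by nra. ring. }
  unfold Hf, H' in Hc2. rewrite Gf_half, cos_PI2 in Hc2.
  pose proof (sin_gt_0 c ltac:(lra) ltac:(lra)).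
  assert (0 < sin c ^ L) by (apply pow_lt; lra).
  assert (H'neg : (1 - INR L) * cos c ^ 2 / (sin c * sin c ^ L) <= 0).
  { assert (1 <= INR L) by (apply (le_INR 1); auto). unfold Rdiv.
    apply Rmult_le_0_r. assert (0 <= cos c ^ 2) by apply pow2_ge_0. nra.
    left; apply Rinv_0_lt_compat; nra. }
  assert (Hge : Gf L x + cos x / sin x ^ L >= 0) by nra.
  pose proof (sin_gt_0 x ltac:(lra) ltac:(lra)).
  assert (0 < sin x ^ L) by (apply pow_lt; lra).
  assert (0 <= cos x) by (apply cos_ge_0; lra).
  pose proof (COS_bound x).
  rewrite Rabs_left1 by lra.
  assert (- Gf L x <= cos x / sin x ^ L) by lra.
  apply Rmult_le_compat_l with (r := sin x ^ L) in H5; [|lra].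
  replace (sin x ^ L * (cos x / sin x ^ L)) with (cos x) in H5 by (field; lra). lra.
Qed.

Lemma cos_lb y : 0 <= y <= 2 -> 1 - y^2/2 <= cos y.
Proof.
  intros Hy. replace y with (2 * (y/2)) at 2 by field. rewrite cos_2a_sin.
  pose proof (sin_le_id (y/2) ltac:(lra)).
  assert (0 <= sin (y/2)) by (apply sin_ge_0; pose proof PI_RGT_0; pose proof PI2_1; lra).
  nra.
Qed.

Lemma sin_lb2 y : 0 <= y <= 1 -> y / 2 <= sin y.
Proof.
  intros Hy. destruct (Req_dec y 0) as [->|Hne]. rewrite sin_0; lra.
  destruct (MVT_cor2 sin cos 0 y) as [c [Hc Hc2]]. lra.
  intros; apply derivable_pt_lim_sin.
  rewrite sin_0 in Hc. pose proof (cos_lb c ltac:(lra)). nra.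
Qed.

Lemma tan_lb y : 0 < y <= 1 -> y / 2 <= tan y.
Proof.
  intros Hy. unfold tan. pose proof (sin_lb2 y ltac:(lra)).
  pose proof (cos_lb y ltac:(lra)). pose proof (COS_bound y).
  assert (0 < cos y) by nra.
  assert (0 <= sin y) by lra.
  apply Rle_trans with (sin y); auto.
  apply Rmult_le_reg_r with (cos y); auto. unfold Rdiv. rewrite Rmult_assoc, Rinv_l; nra.
Qed.

Lemma inv_le_div X T A : 0 < X -> 0 < T -> T <= A * X -> / X <= A / T.
Proof.
  intros HX HT H. apply Rmult_le_reg_l with (X * T). nra.
  replace (X * T * / X) with T by (field; lra).
  replace (X * T * (A / T)) with (A * X) by (field; lra). auto.
Qed.

Lemma Rpower_pos x y : 0 < Rpower x y.
Proof. unfold Rpower; apply exp_pos. Qed.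

Lemma prof_bound N p tau : (3 <= N)%nat -> 1 < p -> 0 < tau <= 1 ->
  0 < sing_profile N p tau <=
  acoef N p * Rpower 2 (INR N - 2) * Rpower 2 (mu p) / Rpower tau (mu p).
Proof.
  intros HN Hp Ht.
  assert (HN3 : 3 <= INR N) by (replace 3 with (INR 3) by (simpl; ring); apply le_INR; auto).
  assert (Hmu : 0 < mu p) by (unfold mu; apply Rdiv_lt_0_compat; lra).
  pose proof (cos_lb (tau/2) ltac:(lra)) as Hc.
  assert (Hc2 : 1/2 <= cos (tau / 2)) by nra.
  pose proof (tan_lb (tau/2) ltac:(lra)) as Ht2.
  unfold sing_profile.
  assert (A1 : 0 < acoef N p) by (unfold acoef; apply Rpower_pos).
  assert (B1 : 0 < Rpower (cos (tau / 2)) (- (INR N - 2))) by apply Rpower_pos.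
  assert (C1 : 0 < Rpower (2 * tan (tau / 2)) (- mu p)) by apply Rpower_pos.
  split. apply Rmult_lt_0_compat; [apply Rmult_lt_0_compat|]; auto.
  assert (B2 : Rpower (cos (tau / 2)) (- (INR N - 2)) <= Rpower 2 (INR N - 2)).
  { rewrite Rpower_Ropp.
    assert (Rpower (1/2) (INR N - 2) <= Rpower (cos (tau/2)) (INR N - 2)) by (apply Rle_Rpower_l; lra).
    assert (Rpower (1/2) (INR N - 2) * Rpower 2 (INR N - 2) = 1).
    { rewrite Rpower_mult_distr by lra. replace (1/2*2) with 1 by field.
      unfold Rpower. rewrite ln_1, Rmult_0_r, exp_0. auto. }
    pose proof (Rpower_pos (1/2) (INR N - 2)). pose proof (Rpower_pos 2 (INR N - 2)).
    apply Rmult_le_reg_l with (Rpower (cos (tau / 2)) (INR N - 2)). apply Rpower_pos.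
    rewrite Rinv_r by (apply Rgt_not_eq, Rpower_pos). nra. }
  assert (C2 : Rpower (2 * tan (tau / 2)) (- mu p) <= Rpower 2 (mu p) / Rpower tau (mu p)).
  { rewrite Rpower_Ropp.
    assert (Rpower (tau * (1/2)) (mu p) <= Rpower (2 * tan (tau/2)) (mu p)) by (apply Rle_Rpower_l; lra).
    rewrite <- Rpower_mult_distr in H by lra.
    assert (Rpower (1/2) (mu p) * Rpower 2 (mu p) = 1).
    { rewrite Rpower_mult_distr by lra. replace (1/2*2) with 1 by field.
      unfold Rpower. rewrite ln_1, Rmult_0_r, exp_0. auto. }
    pose proof (Rpower_pos (1/2) (mu p)). pose proof (Rpower_pos 2 (mu p)).
    pose proof (Rpower_pos tau (mu p)). pose proof (Rpower_pos (2 * tan (tau / 2)) (mu p)).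
    apply inv_le_div; auto.
    replace (Rpower tau (mu p)) with (Rpower tau (mu p) * Rpower (1/2) (mu p) * Rpower 2 (mu p)) by (rewrite Rmult_assoc, H0; ring).
    nra. }
  replace (acoef N p * Rpower 2 (INR N - 2) * Rpower 2 (mu p) / Rpower tau (mu p))
    with (acoef N p * Rpower 2 (INR N - 2) * (Rpower 2 (mu p) / Rpower tau (mu p))) by (field; apply Rgt_not_eq, Rpower_pos).
  apply Rmult_le_compat; try lra. apply Rmult_le_pos; lra.
  apply Rmult_le_compat_l; lra.
Qed.

Lemma Rpower_inv v q : 0 < v -> Rpower (/ v) q = / Rpower v q.
Proof. intros Hv. unfold Rpower. rewrite ln_Rinv by auto. rewrite <- exp_Ropp. f_equal. ring. Qed.

Lemma Rpower_small a eta : 0 < a -> 0 < eta -> forall z, 0 < z <= Rpower eta (/ a) -> Rpower z a <= eta.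
Proof.
  intros Ha He z Hz. apply Rle_trans with (Rpower (Rpower eta (/ a)) a).
  apply Rle_Rpower_l; lra. rewrite Rpower_mult. rewrite Rinv_l by lra. rewrite Rpower_1; lra.
Qed.

Lemma sing_bd0 L p t G U U1 T K mu0 d1 :
  0 < p -> 0 < mu0 -> mu0 * (p + 1) = 2 + 2 * mu0 -> 0 < INR L - 2 * mu0 ->
  0 < T < PI ->
  (forall x, 0 < x < T -> derivable_pt_lim U x (U1 x)) ->
  (forall x, 0 < x < T -> 0 < U x) ->
  0 < K -> 0 < d1 -> (forall tau, 0 < tau < d1 -> U tau <= K / Rpower tau mu0) ->
  (exists d, d > 0 /\ forall x, 0 < x < d -> sin x ^ L * Rabs (G x) <= 1) ->
  forall x e, 0 < x < T -> e > 0 -> exists y, 0 < y < x /\ Pf L p t G U U1 y >= - e.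
Proof.
  intros Hp Hmu Hmup HLmu HT dU HU HK Hd1 HUb [dg [Hdg HGb]] x e Hx He.
  set (RK := Rpower K (p + 1)).
  assert (HRK : 0 < RK) by apply Rpower_pos.
  set (C1 := 4 * (Rabs t + 1) * (K^2 / 2 + RK / (p + 1)) + K^2).
  assert (HC1 : 0 < C1).
  { unfold C1. pose proof (Rabs_pos t). assert (0 < RK / (p+1)) by (apply Rdiv_lt_0_compat; lra). nra. }
  assert (H2L : 0 < 2 ^ L) by (apply pow_lt; lra).
  set (eta := e / (2 ^ L * C1)).
  assert (Heta : 0 < eta) by (apply Rdiv_lt_0_compat; nra).
  set (al := INR L - 2 * mu0).
  set (z0 := Rpower eta (/ al)).
  assert (Hz0 : 0 < z0) by apply Rpower_pos.
  assert (Hm : 0 < Rmin (Rmin (Rmin x d1) (Rmin 1 dg)) z0) by (repeat apply Rmin_pos; lra).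
  pose proof (Rmin_l (Rmin (Rmin x d1) (Rmin 1 dg)) z0).
  pose proof (Rmin_r (Rmin (Rmin x d1) (Rmin 1 dg)) z0).
  pose proof (Rmin_l (Rmin x d1) (Rmin 1 dg)). pose proof (Rmin_r (Rmin x d1) (Rmin 1 dg)).
  pose proof (Rmin_l x d1). pose proof (Rmin_r x d1). pose proof (Rmin_l 1 dg). pose proof (Rmin_r 1 dg).
  set (m := Rmin (Rmin (Rmin x d1) (Rmin 1 dg)) z0) in *.
  set (z := m / 4).
  assert (Hz : 0 < z) by (unfold z; lra).
  destruct (MVT_cor2 U U1 z (2 * z)) as [xi [Hmvt Hxi]]. lra.
  { intros c Hc. apply dU. unfold z in *; lra. }
  exists xi. split. unfold z in *; lra.
  set (v := Rpower z mu0).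
  assert (Hv : 0 < v) by apply Rpower_pos.
  assert (Uxi : 0 < U xi <= K / v).
  { split. apply HU; unfold z in *; lra.
    apply Rle_trans with (K / Rpower xi mu0). apply HUb; unfold z in *; lra.
    unfold Rdiv. apply Rmult_le_compat_l; [lra|]. apply Rinv_le_contravar; auto.
    apply Rle_Rpower_l; lra. }
  assert (Uz : 0 < U z <= K / v).
  { split. apply HU; unfold z in *; lra. apply HUb; unfold z in *; lra. }
  assert (U2z : 0 < U (2 * z) <= K / v).
  { split. apply HU; unfold z in *; lra.
    apply Rle_trans with (K / Rpower (2 * z) mu0). apply HUb; unfold z in *; lra.
    unfold Rdiv. apply Rmult_le_compat_l; [lra|]. apply Rinv_le_contravar; auto.
    apply Rle_Rpower_l; lra. }
  assert (U1xi : Rabs (U1 xi) <= K / (v * z)).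
  { assert (Rabs (U1 xi) * z <= K / v).
    { replace (Rabs (U1 xi) * z) with (Rabs (U1 xi * (2 * z - z))) by (rewrite Rabs_mult, (Rabs_pos_eq (2*z - z)) by lra; ring).
      rewrite <- Hmvt. unfold Rabs; destruct Rcase_abs; lra. }
    apply Rmult_le_reg_r with z; auto. replace (K / (v * z) * z) with (K / v) by (field; lra). auto. }
  set (W := Rpower (U xi) (p + 1)).
  assert (HW : W <= RK / (z^2 * v^2)).
  { apply Rle_trans with (Rpower (K / v) (p + 1)). apply Rle_Rpower_l; lra.
    unfold Rdiv. rewrite <- Rpower_mult_distr by (try apply Rinv_0_lt_compat; lra).
    rewrite Rpower_inv by auto. fold RK. apply Rmult_le_compat_l; [lra|].
    right. f_equal. unfold v. rewrite Rpower_mult, Hmup, Rpower_plus.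
    replace (2 * mu0) with (mu0 + mu0) by ring. rewrite Rpower_plus.
    replace 2 with (INR 2) by (simpl; ring). rewrite Rpower_pow by auto. ring. }
  assert (Hxi1 : 0 < xi <= 1) by (unfold z in *; lra).
  pose proof (sin_gt_0 xi ltac:(lra) ltac:(pose proof PI2_1; lra)).
  pose proof (SIN_bound xi). pose proof (sin_le_id xi ltac:(lra)).
  assert (Gxi : sin xi ^ L * Rabs (G xi) <= 1) by (apply HGb; unfold z in *; lra).
  pose proof (Pbound L p t G U U1 xi Hp ltac:(lra) (proj1 Uxi) Gxi) as PB.
  fold W in PB.
  set (s := sin xi) in *.
  assert (Hs : 0 < s <= 2 * z) by (unfold z in *; lra).
  assert (Ha : 0 < s ^ L <= (2 * z) ^ L) by (split; [apply pow_lt; lra| apply pow_incr; lra]).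
  set (a := s ^ L) in *.
  assert (E1 : U1 xi ^ 2 / 2 + W / (p + 1) <= (K^2 / 2 + RK / (p+1)) / (z^2 * v^2)).
  { assert (U1 xi ^ 2 <= (K / (v * z))^2).
    { replace (U1 xi ^ 2) with (Rabs (U1 xi) ^ 2) by (apply pow2_abs).
      apply pow_incr. split; auto. apply Rabs_pos. }
    assert (W / (p+1) <= RK / (z ^ 2 * v ^ 2) / (p + 1)).
    { unfold Rdiv at 1 3. apply Rmult_le_compat_r; auto. left; apply Rinv_0_lt_compat; lra. }
    replace ((K ^ 2 / 2 + RK / (p + 1)) / (z ^ 2 * v ^ 2)) with ((K / (v * z))^2 / 2 + RK / (z ^ 2 * v ^ 2) / (p + 1)) by (field; lra).
    lra. }
  assert (E2 : s * a * U xi * Rabs (U1 xi) / 2 <= (2 * z) * (2 * z) ^ L * (K / v) * (K / (v * z)) / 2).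
  { unfold Rdiv at 1 4. apply Rmult_le_compat_r; [lra|].
    pose proof (Rabs_pos (U1 xi)).
    assert (0 <= s * a) by nra.
    assert (s * a <= 2 * z * (2 * z) ^ L) by (apply Rmult_le_compat; lra).
    assert (0 <= s * a * U xi) by nra.
    assert (s * a * U xi <= 2 * z * (2 * z) ^ L * (K / v)) by (apply Rmult_le_compat; lra).
    apply Rmult_le_compat; lra. }
  assert (E3 : s ^ 2 * a * (Rabs t + 1) * (U1 xi ^ 2 / 2 + W / (p + 1)) <=
               (2 * z) ^ 2 * (2 * z) ^ L * (Rabs t + 1) * ((K^2 / 2 + RK / (p+1)) / (z^2 * v^2))).
  { pose proof (Rabs_pos t). assert (0 <= U1 xi ^ 2 / 2 + W / (p + 1)).
    { assert (0 < W) by apply Rpower_pos. assert (0 < W / (p+1)) by (apply Rdiv_lt_0_compat; lra).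
      assert (0 <= U1 xi ^ 2) by apply pow2_ge_0. lra. }
    apply Rmult_le_compat; try lra.
    apply Rmult_le_pos; [|lra]. apply Rmult_le_pos; [apply pow2_ge_0|lra].
    apply Rmult_le_compat_r; [lra|]. apply Rmult_le_compat; try lra. apply pow2_ge_0.
    apply pow_incr; lra. }
  assert (E4 : (2 * z) ^ 2 * (2 * z) ^ L * (Rabs t + 1) * ((K^2 / 2 + RK / (p+1)) / (z^2 * v^2))
               + (2 * z) * (2 * z) ^ L * (K / v) * (K / (v * z)) / 2
               = 2 ^ L * C1 * (z ^ L / v ^ 2)).
  { unfold C1. rewrite !Rpow_mult_distr. field. lra. }
  assert (E5 : z ^ L / v ^ 2 = Rpower z al).
  { unfold al, v. unfold Rminus. rewrite Rpower_plus, Rpower_pow by auto.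
    replace (- (2 * mu0)) with (- (mu0 + mu0)) by ring. rewrite Rpower_Ropp, Rpower_plus. field.
    apply Rgt_not_eq, Rpower_pos. }
  assert (E6 : Rpower z al <= eta).
  { apply Rpower_small; auto. fold z0. unfold z in *; lra. }
  assert (E7 : 2 ^ L * C1 * eta = e) by (unfold eta; field; nra).
  assert (HPe : Rabs (Pf L p t G U U1 xi) <= e).
  { eapply Rle_trans. exact PB. rewrite <- E7.
    apply Rle_trans with (2 ^ L * C1 * (z ^ L / v ^ 2)).
    rewrite <- E4. apply Rplus_le_compat; auto.
    rewrite E5. apply Rmult_le_compat_l; nra. }
  apply abs_le in HPe. lra.
Qed.

Lemma dpl_cont f x l : derivable_pt_lim f x l ->
  forall e, e > 0 -> exists d, d > 0 /\ forall y, Rabs (y - x) < d -> Rabs (f y - f x) < e.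
Proof.
  intros H e He. destruct (H 1 ltac:(lra)) as [d Hh].
  exists (Rmin d (e / (Rabs l + 1))). split.
  { apply Rmin_pos. apply cond_pos. apply Rdiv_lt_0_compat; auto. pose proof (Rabs_pos l); lra. }
  intros y Hyx. destruct (Req_dec y x) as [->|Hne].
  { rewrite Rminus_diag, Rabs_R0; lra. }
  pose proof (Rmin_l d (e / (Rabs l + 1))). pose proof (Rmin_r d (e / (Rabs l + 1))).
  specialize (Hh (y - x) ltac:(lra) ltac:(lra)).
  replace (x + (y - x)) with y in Hh by ring.
  assert (Hq : Rabs ((f y - f x) / (y - x)) < Rabs l + 1).
  { eapply Rle_lt_trans. 2: { instantiate (1 := Rabs l + Rabs ((f y - f x) / (y - x) - l)). lra. }
    replace ((f y - f x) / (y - x)) with (l + ((f y - f x) / (y - x) - l)) at 1 by ring.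
    apply Rabs_triang. }
  replace (f y - f x) with ((f y - f x) / (y - x) * (y - x)) by (field; lra).
  rewrite Rabs_mult.
  assert (0 < Rabs (y - x)) by (apply Rabs_pos_lt; lra).
  assert (Rabs (y - x) < e / (Rabs l + 1)) by lra.
  pose proof (Rabs_pos l).
  assert (e / (Rabs l + 1) * (Rabs l + 1) = e) by (field; lra).
  pose proof (Rabs_pos ((f y - f x) / (y - x))). nra.
Qed.

Lemma spow_pos p u : 0 < u -> spow p u = Rpower u p.
Proof.
  intros Hu. unfold spow. rewrite Rabs_pos_eq by lra.
  destruct (Rlt_dec 0 u); [|lra].
  replace p with ((p - 1) + 1) at 2 by ring. rewrite Rpower_plus, Rpower_1; auto.
Qed.

Lemma pS_facts L p : (1 <= L)%nat -> pS (S (S L)) < p ->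
  1 < p /\ 0 < mu p /\ mu p * (p + 1) = 2 + 2 * mu p /\ 0 < INR L - 2 * mu p.
Proof.
  intros HL Hp. unfold pS in Hp. rewrite !S_INR in Hp.
  assert (1 <= INR L) by (replace 1 with (INR 1) by (simpl; ring); apply le_INR; auto).
  replace (INR L + 1 + 1 + 2) with (INR L + 4) in Hp by ring.
  replace (INR L + 1 + 1 - 2) with (INR L) in Hp by ring.
  assert (HpL : INR L + 4 < p * INR L).
  { apply Rmult_lt_compat_r with (r := INR L) in Hp; [|lra].
    replace ((INR L + 4) / INR L * INR L) with (INR L + 4) in Hp by (field; lra). lra. }
  assert (1 < p) by nra.
  unfold mu. repeat split; auto.
  apply Rdiv_lt_0_compat; lra.
  field; lra.
  apply Rmult_lt_reg_r with (p - 1). lra.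
  replace ((INR L - 2 * (2 / (p - 1))) * (p - 1)) with (INR L * (p - 1) - 4) by (field; lra). lra.
Qed.

Lemma sing_core L p Ts t G : (1 <= L)%nat -> pS (S (S L)) < p -> is_Theta_star (S (S L)) p Ts ->
  (forall x, 0 < x < Ts -> derivable_pt_lim G x (/ (sin x * sin x ^ L))) ->
  (forall x, 0 < x < Ts -> G x <= t) ->
  (forall x, 0 < x < Ts -> 0 <= Ef L p t G x) ->
  (exists d, d > 0 /\ forall x, 0 < x < d -> sin x ^ L * Rabs (G x) <= 1) ->
  forall a b, 0 < a -> a < b -> b < Ts -> exists c, a < c < b /\ Ef L p t G c = 0.
Proof.
  intros HL Hp [HTs [U [U1 [U2 [T1 [HT1 [Hode [Hasym [Hpos HUT]]]]]]]]] dG HGt HE HGb.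
  destruct (pS_facts L p HL Hp) as [Hp1 [Hmu [Hmup HLmu]]].
  assert (HD : forall x, 0 < x < T1 -> derivable_pt_lim U x (U1 x)) by (intros; apply Hode; auto).
  assert (HD1 : forall x, 0 < x < T1 -> derivable_pt_lim U1 x (U2 x)) by (intros; apply Hode; auto).
  assert (HN3 : (3 <= S (S L))%nat) by lia.
  destruct (Hasym 1 ltac:(lra)) as [da [Hda Hasb]].
  set (K0 := acoef (S (S L)) p * Rpower 2 (INR (S (S L)) - 2) * Rpower 2 (mu p)).
  assert (HK0 : 0 < K0) by (unfold K0, acoef; repeat apply Rmult_lt_0_compat; apply Rpower_pos).
  apply (core2 L p t G U U1 U2 Ts); auto; try lra.
  - intros x Hx; apply HD; lra.
  - intros x Hx; apply HD1; lra.
  - intros x Hx. rewrite <- spow_pos by (apply Hpos; auto). rewrite <- INR_SSL. apply Hode; lra.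
  - intros e He. destruct (dpl_cont U Ts (U1 Ts) (HD Ts ltac:(lra)) e He) as [d [Hd Hc]].
    exists d; split; auto. intros y Hy.
    assert (Hy' : Rabs (y - Ts) < d) by (rewrite Rabs_left; lra).
    specialize (Hc y Hy'). rewrite HUT, Rminus_0_r in Hc. exact Hc.
  - destruct (dpl_cont U1 Ts (U2 Ts) (HD1 Ts ltac:(lra)) 1 ltac:(lra)) as [d [Hd Hc]].
    exists (Rabs (U1 Ts) + 1), d; split; auto. intros y Hy.
    assert (Rabs (U1 y - U1 Ts) < 1) by (apply Hc; rewrite Rabs_left; lra).
    assert (Rabs (U1 y) <= Rabs (U1 y - U1 Ts) + Rabs (U1 Ts)).
    { replace (U1 y) with ((U1 y - U1 Ts) + U1 Ts) at 1 by ring. apply Rabs_triang. }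
    lra.
  - apply (sing_bd0 L p t G U U1 Ts (2 * K0) (mu p) (Rmin da 1)); auto; try lra.
    + intros x Hx; apply HD; lra.
    + apply Rmin_pos; lra.
    + intros tau Htau. pose proof (Rmin_l da 1). pose proof (Rmin_r da 1).
      specialize (Hasb tau ltac:(lra)).
      destruct (prof_bound (S (S L)) p tau HN3 Hp1 ltac:(lra)) as [Hp0 Hpb].
      fold K0 in Hpb. rewrite (Rabs_pos_eq (sing_profile (S (S L)) p tau)) in Hasb by lra.
      apply abs_le in Hasb.
      replace (2 * K0 / Rpower tau (mu p)) with (2 * (K0 / Rpower tau (mu p))) by (field; apply Rgt_not_eq, Rpower_pos).
      lra.
Qed.

Lemma Ef_pos L p t G x : 4 * (INR L + 1) * (Rabs t + 1) < p + 3 -> 0 < x < PI -> G x <= t ->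
  (x <= PI / 2 -> sin x ^ L * Rabs (G x) <= 1) -> 0 < Ef L p t G x.
Proof.
  intros Hp Hx HG Hb. unfold Ef.
  pose proof (sin_gt_0 x ltac:(lra) ltac:(lra)).
  pose proof (sinL_le1 x L Hx) as Ha. pose proof (pos_INR L).
  set (a := sin x ^ L) in *.
  destruct (Rle_or_lt x (PI/2)) as [h|h].
  - specialize (Hb h).
    assert (0 <= cos x) by (apply cos_ge_0; lra). pose proof (COS_bound x).
    assert (Rabs (t - G x) <= Rabs t + Rabs (G x)) by (unfold Rminus; rewrite <- (Rabs_Ropp (G x)); apply Rabs_triang).
    assert (t - G x <= Rabs (t - G x)) by apply Rle_abs.
    assert (a * (t - G x) <= Rabs t + 1).
    { pose proof (Rabs_pos t). pose proof (Rabs_pos (G x)).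
      apply Rle_trans with (a * (Rabs t + Rabs (G x))). apply Rmult_le_compat_l; lra. nra. }
    assert (0 <= a * (t - G x)) by (apply Rmult_le_pos; lra).
    assert (a * cos x * (t - G x) <= Rabs t + 1).
    { replace (a * cos x * (t - G x)) with (cos x * (a * (t - G x))) by ring.
      pose proof (Rabs_pos t). nra. }
    replace (4 * (INR L + 1) * a * cos x * (t - G x)) with (4 * (INR L + 1) * (a * cos x * (t - G x))) by ring.
    assert (4 * (INR L + 1) * (a * cos x * (t - G x)) <= 4 * (INR L + 1) * (Rabs t + 1)) by (apply Rmult_le_compat_l; lra).
    lra.
  - assert (cos x < 0) by (apply cos_lt_0; lra).
    assert (0 <= a * (t - G x)) by (apply Rmult_le_pos; lra).
    assert (a * cos x * (t - G x) <= 0) by (replace (a * cos x * (t - G x)) with (cos x * (a * (t - G x))) by ring; nra).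
    assert (0 <= 4 * (INR L + 1)) by lra.
    assert (4 * (INR L + 1) * a * cos x * (t - G x) <= 0).
    { replace (4 * (INR L + 1) * a * cos x * (t - G x)) with (4 * (INR L + 1) * (a * cos x * (t - G x))) by ring. nra. }
    pose proof (Rabs_pos t). nra.
Qed.

Lemma asin_pos S : 0 < S <= 1 -> 0 < asin S.
Proof.
  intros HS. pose proof (asin_bound S) as Hb.
  destruct (Rle_or_lt (asin S) 0) as [h|h]; auto.
  assert (0 <= sin (- asin S)) by (apply sin_ge_0; lra).
  rewrite sin_neg, sin_asin in H by lra. lra.
Qed.

Theorem theoremD (N : nat) (HN : (3 <= N)%nat) (Tlow Tstar : R -> R)
  (Hlow : forall p, p > pS N ->
     0 < Tlow p < PI /\
     (forall T, 0 < T < Tlow p -> ~ exists U, regular_sol N p T U) /\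
     (forall T, Tlow p < T < PI -> exists U, regular_sol N p T U))
  (Hstar : forall p, p > pS N -> is_Theta_star N p (Tstar p)) :
  tends_at_infty Tlow PI /\
  tends_at_infty Tstar PI /\
  (N = 3%nat ->
     (forall p, p >= 5 -> forall T, 0 < T <= PI - asin (4 / (p - 1)) ->
        ~ exists U, regular_sol N p T U) /\
     (forall p, p > 5 -> Tlow p >= PI - asin (4 / (p - 1)))).
Proof.
  destruct N as [|[|L]]; try lia.
  assert (HL : (1 <= L)%nat) by lia.
  pose proof PI_RGT_0 as Hpi. pose proof PI2_1 as Hpi2.
  assert (Key : forall e, e > 0 -> exists M, forall p, p > M ->
            pS (S (S L)) < p /\ 4 * (INR L + 1) * (Rabs (Gf L (PI - Rmin e 1 / 2)) + 1) < p + 3).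
  { intros e He. exists (Rmax (pS (S (S L))) (4 * (INR L + 1) * (Rabs (Gf L (PI - Rmin e 1 / 2)) + 1))).
    intros p Hp. pose proof (Rmax_l (pS (S (S L))) (4 * (INR L + 1) * (Rabs (Gf L (PI - Rmin e 1 / 2)) + 1))).
    pose proof (Rmax_r (pS (S (S L))) (4 * (INR L + 1) * (Rabs (Gf L (PI - Rmin e 1 / 2)) + 1))).
    split; lra. }
  assert (Gcond : forall th t T, 0 < T -> T <= th -> th < PI -> t = Gf L th ->
     (forall x, 0 < x < T -> derivable_pt_lim (Gf L) x (/ (sin x * sin x ^ L))) /\
     (forall x, 0 < x < T -> Gf L x <= t) /\
     (exists d, d > 0 /\ forall x, 0 < x < d -> sin x ^ L * Rabs (Gf L x) <= 1)).
  { intros th t T HT HTth Hth ->. split; [|split].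
    - intros x Hx. apply Gf_der; lra.
    - intros x Hx. apply Gf_le; lra.
    - exists (PI/2). split. lra. intros x Hx. apply Gf_bound; auto; lra. }
  split; [|split].
  - intros e He. destruct (Key e He) as [M HM]. exists M. intros p Hp.
    destruct (HM p Hp) as [HpS Hbig].
    pose proof (Rmin_l e 1). pose proof (Rmin_r e 1).
    assert (He1 : 0 < Rmin e 1) by (apply Rmin_pos; lra).
    set (e1 := Rmin e 1) in *. set (th := PI - e1 / 2) in *. set (t := Gf L th) in *.
    destruct (Hlow p HpS) as [[HT0 HTpi] [_ Hex]].
    assert (Hgt : PI - e1 < Tlow p).
    { destruct (Rle_or_lt (Tlow p) (PI - e1)) as [h|h]; auto. exfalso.
      destruct (Hex th ltac:(unfold th; lra)) as [U HU].
      destruct (pS_facts L p HL HpS) as [Hp1 _].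
      destruct (Gcond th t th ltac:(unfold th; lra) ltac:(lra) ltac:(unfold th; lra) eq_refl) as [G1 [G2 G3]].
      destruct (reg_core L p th U t (Gf L) ltac:(lra) ltac:(unfold th; lra) HU G1 G2) with (a := th/4) (b := th/2)
        as [c [Hc Ec]]; auto; try (unfold th; lra).
      + intros x Hx. left. apply Ef_pos; [exact Hbig| unfold th in *; lra | apply G2; lra | intros hx; apply Gf_bound; [exact HL| lra]].
      + assert (0 < Ef L p t (Gf L) c); [|lra].
        apply Ef_pos; [exact Hbig| unfold th in *; lra | apply G2; unfold th in *; lra | intros hx; apply Gf_bound; [exact HL| lra]]. }
    rewrite Rabs_left by lra. lra.
  - intros e He. destruct (Key e He) as [M HM]. exists M. intros p Hp.
    destruct (HM p Hp) as [HpS Hbig].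
    pose proof (Rmin_l e 1). pose proof (Rmin_r e 1).
    assert (He1 : 0 < Rmin e 1) by (apply Rmin_pos; lra).
    set (e1 := Rmin e 1) in *. set (th := PI - e1 / 2) in *. set (t := Gf L th) in *.
    pose proof (Hstar p HpS) as Hst. destruct (proj1 Hst) as [HT0 HTpi].
    assert (Hgt : PI - e1 < Tstar p).
    { destruct (Rle_or_lt (Tstar p) (PI - e1)) as [h|h]; auto. exfalso.
      destruct (Gcond th t (Tstar p) ltac:(lra) ltac:(unfold th; lra) ltac:(unfold th; lra) eq_refl) as [G1 [G2 G3]].
      destruct (sing_core L p (Tstar p) t (Gf L) HL HpS Hst G1 G2) with (a := Tstar p/4) (b := Tstar p/2)
        as [c [Hc Ec]]; auto; try lra.
      + intros x Hx. left. apply Ef_pos; [exact Hbig| lra | apply G2; lra | intros hx; apply Gf_bound; [exact HL| lra]].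
      + assert (0 < Ef L p t (Gf L) c); [|lra].
        apply Ef_pos; [exact Hbig| lra | apply G2; lra | intros hx; apply Gf_bound; [exact HL| lra]]. }
    rewrite Rabs_left by lra. lra.
  - intros HN3. injection HN3 as ->. split.
    + intros p Hp T HT. apply partA; auto.
    + intros p Hp.
      assert (HpS : pS 3 = 5) by (unfold pS; simpl; field).
      destruct (Hlow p ltac:(lra)) as [[HT0 HTpi] [_ Hex]].
      assert (HS : 0 < 4 / (p - 1) <= 1).
      { split. apply Rdiv_lt_0_compat; lra.
        apply Rmult_le_reg_r with (p - 1). lra. unfold Rdiv. rewrite Rmult_assoc, Rinv_l; lra. }
      pose proof (asin_pos _ HS).
      destruct (Rle_or_lt (PI - asin (4 / (p - 1))) (Tlow p)) as [h|h]; [lra|].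
      exfalso.
      set (T := (Tlow p + (PI - asin (4 / (p - 1)))) / 2).
      destruct (Hex T ltac:(unfold T; lra)) as [U HU].
      apply (partA p T); [lra| unfold T; lra| exists U; exact HU].
Qed.
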